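(* Consider the decentralized caching problem with $N$ files and local cache size of $M$ files per user, with $0<M\le N$. For every file size $F$, every $\epsilon>0$, every number $K$ of requesting users and every statistics $\boldsymbol{s}$ of demands in $\{1,\dots,N\}^K$, $$\min_{P_{\mathcal{M}}}R^*_{\epsilon,K}(\boldsymbol{s},P_{\mathcal{M}})\ \ge\ \frac{N-M}{M}\left(1-\left(1-\frac{M}{N}\right)^{N_{\mathrm{e}}(\boldsymbol{s})}\right)-\left(\frac{1}{F}+N_{\mathrm{e}}^2(\boldsymbol{s})\epsilon\right),$$ where the minimum is over all prefetching distributions $P_{\mathcal{M}}$.
   Context: Setting: $N$ files of $F$ bits each, all bits i.i.d. Bernoulli$(1/2)$. A prefetching distribution $P_{\mathcal{M}}$ is a probability distribution on sets of at most $MF$ bit indices; with $K$ requesting users, cache index sets $\mathcal{M}_1,\dots,\mathcal{M}_K$ are drawn i.i.d. from $P_{\mathcal{M}}$ and user $k$ stores the indexed bits uncoded. For a deterministic prefetching $\boldsymbol{\mathcal{M}}$ and demand $\boldsymbol{d}\in\{1,\dots,N\}^K$, a rate $R$ is $\epsilon$-achievable if there are an encoder $X=\psi(W_1,\dots,W_N)\in\{0,1\}^{RF}$ and decoders such that each user $k$ recovers $W_{d_k}$ from $X$ and its cached bits with error probability at most $\epsilon$. Given $P_{\mathcal{M}}$ and $\boldsymbol{d}$, $R$ is $\epsilon$-achievable if for every realization $\boldsymbol{\mathcal{M}}$ there is $\epsilon_{\boldsymbol{\mathcal{M}}}$ with $R$ $\epsilon_{\boldsymbol{\mathcal{M}}}$-achievable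 given $\boldsymbol{\mathcal{M}},\boldsymbol{d}$ and $\mathbb{E}[\epsilon_{\boldsymbol{\mathcal{M}}}]\le\epsilon$; $R^*_{\epsilon,K}(\boldsymbol{d},P_{\mathcal{M}})$ is the minimum such rate. The statistics $\boldsymbol{s}(\boldsymbol{d})$ of a demand is the length-$N$ array, sorted nonincreasingly, whose $i$-th entry is the number of users requesting the $i$-th most requested file; $\mathcal{D}_{\boldsymbol{s}}$ is the set of demands with statistics $\boldsymbol{s}$; $N_{\mathrm{e}}(\boldsymbol{s})$ is the number of distinct requested files. $R^*_{\epsilon,K}(\boldsymbol{s},P_{\mathcal{M}})=\frac{1}{|\mathcal{D}_{\boldsymbol{s}}|}\sum_{\boldsymbol{d}\in\mathcal{D}_{\boldsymbol{s}}}R^*_{\epsilon,K}(\boldsymbol{d},P_{\mathcal{M}})$. *)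

(* Defs.v *)
From HB Require Import structures.
From mathcomp Require Import all_boot all_order all_algebra.
From mathcomp Require Import boolp classical_sets reals.
Set Implicit Arguments. Unset Strict Implicit. Unset Printing Implicit Defensive.
Import Order.TTheory GRing.Theory Num.Theory.
Local Open Scope ring_scope.

Definition bitidx (N F : nat) := ('I_N * 'I_F)%type.
Definition library (N F : nat) := {ffun bitidx N F -> bool}.
Definition file_of N F (W : library N F) (n : 'I_N) : {ffun 'I_F -> bool} :=
  [ffun j => W (n, j)].
Definition cached N F (A : {set bitidx N F}) (W : library N F) : library N F :=
  [ffun i => if i \in A then W i else false].

Definition prefetching (N F K : nat) := {ffun 'I_K -> {set bitidx N F}}.
Definition demand (N K : nat) := {ffun 'I_K -> 'I_N}.

(* Error probability of user k: the library bits are i.i.d. Bernoulli(1/2),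
   i.e. W is uniform on {0,1}^(N F). *)
Definition err_prob N F K (L : nat) (Mp : prefetching N F K) (d : demand N K)
  (enc : library N F -> {ffun 'I_L -> bool})
  (dec : 'I_K -> {ffun 'I_L -> bool} -> library N F -> {ffun 'I_F -> bool})
  (k : 'I_K) {R : realType} : R :=
  (#|[set W : library N F |
      dec k (enc W) (cached (Mp k) W) != file_of W (d k)]|%:R)
  / (#|{: library N F}|%:R).

Definition achievable_det {R : realType} N F K (Mp : prefetching N F K)
  (d : demand N K) (Rt e : R) : Prop :=
  exists L : nat, (L%:R <= Rt * F%:R) /\
  exists (enc : library N F -> {ffun 'I_L -> bool})
         (dec : 'I_K -> {ffun 'I_L -> bool} -> library N F -> {ffun 'I_F -> bool}),
    forall k : 'I_K, err_prob Mp d enc dec k <= e.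

Definition is_prefetch_dist {R : realType} (N F : nat) (M : R)
  (P : {set bitidx N F} -> R) : Prop :=
  (forall A, 0 <= P A) /\ (\sum_(A : {set bitidx N F}) P A = 1) /\
  (forall A, 0 < P A -> #|A|%:R <= M * F%:R).

Definition prob_real {R : realType} N F K (P : {set bitidx N F} -> R)
  (Mp : prefetching N F K) : R := \prod_(k < K) P (Mp k).

Definition achievable {R : realType} N F K (P : {set bitidx N F} -> R)
  (d : demand N K) (Rt e : R) : Prop :=
  exists epsM : prefetching N F K -> R,
    (forall Mp, achievable_det Mp d Rt (epsM Mp)) /\
    \sum_(Mp : prefetching N F K) prob_real P Mp * epsM Mp <= e.

Definition Rstar_d {R : realType} N F K (P : {set bitidx N F} -> R)
  (d : demand N K) (e : R) : R :=
  inf [set Rt | achievable P d Rt e].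

Definition stats N K (d : demand N K) : seq nat :=
  sort geq [seq #|[set k | d k == n]| | n <- enum 'I_N].

Definition demands_of N K (s : seq nat) : {set demand N K} :=
  [set d | stats d == s].

Definition Ne (s : seq nat) : nat := count (fun x => 0 < x)%N s.

Definition Rstar_s {R : realType} N F K (P : {set bitidx N F} -> R)
  (s : seq nat) (e : R) : R :=
  (\sum_(d in demands_of N K s) Rstar_d P d e) / #|demands_of N K s|%:R.
Arguments Rstar_s {R N F} K P s e.

(* Main.v *)
Require Import Defs.
From HB Require Import structures.
From mathcomp Require Import all_boot all_order all_algebra.
From mathcomp Require Import boolp classical_sets reals.
From mathcomp Require Import ring lra zify.
Set Implicit Arguments. Unset Strict Implicit. Unset Printing Implicit Defensive.
Import Order.TTheory GRing.Theory Num.Theory.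
Local Open Scope ring_scope.

Lemma eqW (R : realType) (x y : R) : x = y -> x <= y.
Proof. by move=> ->. Qed.

Lemma N1nz (R : realType) N : (1 + N%:R : R) != 0.
Proof. by rewrite -mulrS gt_eqF // ltr0n. Qed.

Definition Uset N F K (Mp : prefetching N F K) n (u : 'I_n -> 'I_K)
  (d : demand N K) : {set bitidx N F} :=
  [set b | [exists i : 'I_n, (b.1 == d (u i)) &&
     [forall i' : 'I_n, (i' <= i)%N ==> (b \notin Mp (u i'))]]].

Definition Good N F K L (Mp : prefetching N F K) n (u : 'I_n -> 'I_K)
  (d : demand N K) (enc : library N F -> {ffun 'I_L -> bool})
  (dec : 'I_K -> {ffun 'I_L -> bool} -> library N F -> {ffun 'I_F -> bool}) :=
  [set W : library N F | [forall i : 'I_n,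
     dec (u i) (enc W) (cached (Mp (u i)) W) == file_of W (d (u i))]].

Lemma good_inj N F K L (Mp : prefetching N F K) n (u : 'I_n -> 'I_K)
  (d : demand N K) enc dec :
  {in Good Mp u d enc dec &, injective
     (fun W : library N F => (enc W : {ffun 'I_L -> bool}, cached (~: Uset Mp u d) W))}.
Proof.
move=> W1 W2; rewrite !inE => /forallP G1 /forallP G2 [Ee Ec].
have Ec' b : b \notin Uset Mp u d -> W1 b = W2 b.
  move=> bU; have := congr1 (fun f : library N F => f b) Ec; rewrite !ffunE inE bU //.
have Hf : forall m (i : 'I_n), (i : nat) = m ->
    file_of W1 (d (u i)) = file_of W2 (d (u i)).
  elim/ltn_ind => m IH i im.
  rewrite -(eqP (G1 i)) -(eqP (G2 i)) Ee; congr (dec _ _ _).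
  apply/ffunP => b; rewrite !ffunE; case: ifP => // bM.
  case: (boolP (b \in Uset Mp u d)) => bU; last exact: Ec'.
  move: bU; rewrite inE => /existsP [i'' /andP [/eqP b1 /forallP Hi]].
  have lt : (i'' < i)%N.
    rewrite ltnNge; apply/negP => le; have := Hi i; rewrite le /= bM //.
  have := congr1 (fun f : {ffun 'I_F -> bool} => f b.2) (IH i'' (leq_trans lt (eq_leq im)) i'' erefl).
  by rewrite !ffunE -b1 -surjective_pairing.
apply/ffunP => b.
case: (boolP (b \in Uset Mp u d)) => bU; last exact: Ec'.
move: bU; rewrite inE => /existsP [i /andP [/eqP b1 _]].
have := congr1 (fun f : {ffun 'I_F -> bool} => f b.2) (Hf i i erefl).
by rewrite !ffunE -b1 -surjective_pairing.
Qed.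

Lemma card_good N F K L (Mp : prefetching N F K) n (u : 'I_n -> 'I_K)
  (d : demand N K) enc dec :
  (#|Good (L:=L) Mp u d enc dec| <= 2 ^ L * 2 ^ #|~: Uset Mp u d|)%N.
Proof.
rewrite -(card_in_imset (@good_inj N F K L Mp n u d enc dec)).
set P := [set f : library N F | f \in pffun_on false (~: Uset Mp u d) predT].
have h1 : #|P| = (2 ^ #|~: Uset Mp u d|)%N.
  by rewrite /P cardsE card_pffun_on card_bool.
have h2 : #|finset.setX [set: {ffun 'I_L -> bool}] P| = (2 ^ L * 2 ^ #|~: Uset Mp u d|)%N.
  by rewrite cardsX cardsT card_ffun card_ord card_bool h1.
rewrite -h2; apply: subset_leq_card; apply/fintype.subsetP => x /imsetP [W _ ->].
rewrite !inE /=; apply/pffun_onP; split => //.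
apply/fintype.subsetP => b; rewrite !inE ffunE; case: ifP => // H _; move: H; rewrite !inE; exact: id.
Qed.

Lemma nat_key (G T L u C : nat) : (G <= 2 ^ T)%N -> (G <= 2 ^ L * 2 ^ C)%N ->
  T = (u + C)%N -> (G * u <= (L + 1) * 2 ^ T)%N.
Proof.
move=> h1 h2 hT; case: (leqP u L) => hu.
  apply: (@leq_trans (2 ^ T * L)); first exact: leq_mul.
  by rewrite mulnC leq_mul2r addn1 leqnSn orbT.
have e : u = (L + (u - L))%N by lia.
set t := (u - L)%N in e.
have ht : (t < 2 ^ t)%N by apply: ltn_expl.
have eT : (2 ^ T = 2 ^ L * 2 ^ C * 2 ^ t)%N.
  by rewrite hT e -!expnD; congr (_ ^ _)%N; lia.
rewrite eT e; move: h2 ht; set a := (2 ^ L * 2 ^ C)%N; set b := (2 ^ t)%N.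
move=> h2 ht; nia.
Qed.

Lemma cardT_lib N F (U : {set bitidx N F}) :
  #|{: library N F}| = (2 ^ (#|U| + #|~: U|))%N.
Proof. by rewrite card_ffun card_bool cardsC. Qed.

Lemma card_U_le N F K (Mp : prefetching N F K) n (u : 'I_n -> 'I_K) (d : demand N K) :
  (#|Uset Mp u d| <= n * F)%N.
Proof.
apply: (@leq_trans #|finset.setX [set d (u i) | i : 'I_n] [set: 'I_F]|).
  apply: subset_leq_card; apply/fintype.subsetP => -[b1 b2].
  rewrite !inE /= => /existsP [i /andP [/eqP -> _]].
  by rewrite andbT; apply/imsetP; exists i.
rewrite cardsX cardsT card_ord leq_mul2r.
by apply/orP; right; apply: (leq_trans (leq_imset_card _ _)); rewrite cardE size_enum_ord.
Qed.

Lemma bad_le N F K L (Mp : prefetching N F K) n (u : 'I_n -> 'I_K)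
  (d : demand N K) enc dec :
  (#|~: Good (L:=L) Mp u d enc dec| <= \sum_(i < n)
     #|[set W : library N F | dec (u i) (enc W) (cached (Mp (u i)) W) != file_of W (d (u i))]|)%N.
Proof.
rewrite -sum1_card.
under [X in (_ <= X)%N]eq_bigr => i _ do rewrite -sum1_card big_mkcond /=.
rewrite exchange_big /= [X in (X <= _)%N]big_mkcond /=.
apply: leq_sum => W _; case: ifP => // H; move: H; rewrite !inE negb_forall.
case/existsP => i hi; rewrite (bigD1 i) //= inE hi; exact: leq_addr.
Qed.

Lemma real_bound (R : realType) N F K L (Mp : prefetching N F K) n
  (u : 'I_n -> 'I_K) (d : demand N K) enc dec (eps : R) :
  (forall k, err_prob (L:=L) Mp d enc dec k <= eps) ->
  (#|Uset Mp u d|%:R - 1 - n%:R ^+ 2 * eps * F%:R <= L%:R :> R).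
Proof.
move=> herr.
set U := Uset Mp u d.
set G := Good (L:=L) Mp u d enc dec.
set T := #|{: library N F}|.
have hT : T = (2 ^ (#|U| + #|~: U|))%N by exact: cardT_lib.
have Tpos : (0 < T)%N by rewrite hT expn_gt0.
have hG1 : (#|G| <= 2 ^ (#|U| + #|~: U|))%N by rewrite -hT max_card.
have key := nat_key hG1 (card_good (L:=L) Mp u d enc dec) erefl.
rewrite -hT in key.
have hbad := bad_le (L:=L) Mp u d enc dec.
have hGc : (#|G| + #|~: G| = T)%N by rewrite cardsC.
have hUn := card_U_le Mp u d.
have TR : (0 < T%:R :> R) by rewrite ltr0n.
have k1 : (#|G|%:R * #|U|%:R <= (L%:R + 1) * T%:R :> R).
  have -> : L%:R + 1 = (L + 1)%N%:R :> R by rewrite natrD.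
  by rewrite -!natrM ler_nat.
have k2 : (#|~: G|%:R <= n%:R * eps * T%:R :> R).
  apply: (le_trans (y := (\sum_(i < n) #|[set W : library N F | dec (u i) (enc W)
      (cached (Mp (u i)) W) != file_of W (d (u i))]|)%N%:R)); first by rewrite ler_nat.
  have -> : n%:R * eps * T%:R = \sum_(i < n) (eps * T%:R)
    by rewrite sumr_const card_ord -mulrA mulr_natl.

  rewrite natr_sum; apply: ler_sum => i _.
  have := herr (u i); rewrite /err_prob -/T => h.
  by rewrite -ler_pdivrMr.
have k3 : (#|G|%:R + #|~: G|%:R = T%:R :> R) by rewrite -natrD hGc.
have k4 : (#|U|%:R <= n%:R * F%:R :> R) by rewrite -natrM ler_nat.
have k5 : 0 <= n%:R * eps :> R.
  case: (posnP n) => [->|n0]; first by rewrite mul0r.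
  apply: mulr_ge0 => //; apply: le_trans (herr (u (Ordinal n0))).
  by rewrite /err_prob divr_ge0.
set g := #|G|%:R : R; set c := #|~: G|%:R : R; set x := #|U|%:R : R.
set t := T%:R : R; set a := n%:R * eps.
have x0 : 0 <= x by rewrite ler0n.
have ineq1 : t * (x - 1 - L%:R) <= c * x.
  have : t * x - t - t * L%:R <= t * x - g * x by nra.
  by move=> h; nra.
have ineq2 : c * x <= a * t * x by apply: ler_wpM2r => //; rewrite /a -mulrA mulrC.
have ineq3 : x - 1 - L%:R <= a * x.
  by rewrite -(ler_pM2l TR); nra.
have : a * x <= a * (n%:R * F%:R) by apply: ler_wpM2l.
rewrite expr2; move=> h; rewrite /a in h ineq3; nra.
Qed.

Lemma sum_prob (R : realType) N F K (M : R) (P : {set bitidx N F} -> R) :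
  is_prefetch_dist M P -> \sum_(Mp : prefetching N F K) prob_real P Mp = 1.
Proof.
case=> _ [h1 _].
rewrite /prob_real -(bigA_distr_bigA (fun (k : 'I_K) (A : {set bitidx N F}) => P A)) /=.
by rewrite h1 prodr_const expr1n.
Qed.

Lemma indep (R : realType) N F K (M : R) (P : {set bitidx N F} -> R)
  (S : {set 'I_K}) (g : {set bitidx N F} -> R) :
  is_prefetch_dist M P ->
  \sum_(Mp : prefetching N F K) prob_real P Mp * \prod_(k in S) g (Mp k)
  = (\sum_A P A * g A) ^+ #|S|.
Proof.
case=> _ [h1 _].
rewrite -prodr_const.
transitivity (\prod_(k < K) \sum_A P A * (if k \in S then g A else 1)).
  rewrite (bigA_distr_bigA (fun (k : 'I_K) (A : {set bitidx N F}) =>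
     P A * (if k \in S then g A else 1))) /=.
  apply: eq_bigr => Mp _; rewrite /prob_real big_split /=; congr (_ * _).
  by rewrite big_mkcond.
rewrite [RHS]big_mkcond; apply: eq_bigr => k _; case: ifP => // _.
by under eq_bigr do rewrite mulr1.
Qed.

Lemma avg_bound (R : realType) N F K (M : R) (P : {set bitidx N F} -> R)
  (d : demand N K) (Rt e : R) n (u : 'I_n -> 'I_K) :
  is_prefetch_dist M P -> achievable P d Rt e ->
  \sum_(Mp : prefetching N F K) prob_real P Mp * #|Uset Mp u d|%:R
    - 1 - n%:R ^+ 2 * e * F%:R <= Rt * F%:R.
Proof.
move=> hP [epsM [hach hsum]].
have hp0 Mp : 0 <= prob_real P Mp.
  by apply: prodr_ge0 => k _; case: hP => h _; exact: h.
have hs := sum_prob K hP.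
have per Mp : #|Uset Mp u d|%:R - 1 - n%:R ^+ 2 * epsM Mp * F%:R <= Rt * F%:R.
  have [L [hL [enc [dec herr]]]] := hach Mp.
  exact: le_trans (real_bound u herr) hL.
have : \sum_(Mp : prefetching N F K) prob_real P Mp * (#|Uset Mp u d|%:R - 1 - n%:R ^+ 2 * epsM Mp * F%:R)
        <= \sum_(Mp : prefetching N F K) prob_real P Mp * (Rt * F%:R).
  by apply: ler_sum => Mp _; apply: ler_wpM2l.
rewrite -mulr_suml hs mul1r.
under eq_bigr do rewrite !mulrBr.
rewrite !sumrB -mulr_suml hs mul1r.
have -> : \sum_(Mp : prefetching N F K) prob_real P Mp * (n%:R ^+ 2 * epsM Mp * F%:R)
   = n%:R ^+ 2 * F%:R * \sum_(Mp : prefetching N F K) prob_real P Mp * epsM Mp.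
  rewrite mulr_sumr; apply: eq_bigr => Mp _; ring.
move=> h; apply: le_trans h; rewrite lerD2l lerN2 [X in _ <= X]mulrAC.
by apply: ler_wpM2l => //; rewrite mulr_ge0 // exprn_ge0.
Qed.

Lemma prod_bool (R : realType) (I : finType) (Q B : pred I) :
  \prod_(i | Q i) (B i)%:R = ([forall i, Q i ==> B i])%:R :> R.
Proof.
case: (boolP [forall i, Q i ==> B i]) => [/forallP h|].
  by rewrite big1 // => i Qi; have := h i; rewrite Qi /= => ->.
rewrite negb_forall => /existsP [i]; rewrite negb_imply => /andP [Qi Bi].
by rewrite (bigD1 i) //= (negbTE Bi) mul0r.
Qed.

Lemma sum_bool_uniq (R : realType) (I : finType) (Q : pred I) :
  (forall i j, Q i -> Q j -> i = j) ->
  \sum_i (Q i)%:R = ([exists i, Q i])%:R :> R.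
Proof.
move=> hu; case: (boolP [exists i, Q i]) => [/existsP [i Qi]|].
  rewrite (bigD1 i) //= Qi big1 ?addr0 // => j ji.
  by case: (boolP (Q j)) => // /hu => /(_ _ Qi) h; move: ji; rewrite h eqxx.
by rewrite negb_exists => /forallP h; rewrite big1 // => i _; rewrite (negbTE (h i)).
Qed.

Lemma card_le_ord n (i : 'I_n) : #|[set i' : 'I_n | (i' <= i)%N]| = i.+1.
Proof.
have -> : [set i' : 'I_n | (i' <= i)%N] = widen_ord (ltn_ord i) @: [set: 'I_i.+1].
  apply/setP => x; rewrite !inE; apply/idP/imsetP => [h|[y _ ->]].
    by exists (Ordinal (h : (x < i.+1)%N)) => //; apply: val_inj.
  by rewrite /= -ltnS.
rewrite card_imset ?cardsT ?card_ord //.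
by move=> x y /(congr1 val) /= h; apply: val_inj.
Qed.

Definition qb (R : realType) N F (P : {set bitidx N F} -> R) (b : bitidx N F) : R :=
  \sum_A P A * (b \notin A)%:R.

Lemma EU (R : realType) N F K (M : R) (P : {set bitidx N F} -> R)
  (d : demand N K) n (u : 'I_n -> 'I_K) :
  injective (fun i => d (u i)) -> is_prefetch_dist M P ->
  \sum_(Mp : prefetching N F K) prob_real P Mp * #|Uset Mp u d|%:R
  = \sum_(i < n) \sum_(j < F) qb P (d (u i), j) ^+ i.+1.
Proof.
move=> hinj hP.
have uinj : injective u by move=> x y h; apply: hinj; rewrite /= h.
have e1 (Mp : prefetching N F K) : #|Uset Mp u d|%:R = \sum_b \sum_(i < n)
   ((b.1 == d (u i))%:R * \prod_(i' < n | (i' <= i)%N) (b \notin Mp (u i'))%:R) :> R.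
  rewrite -sum1_card natr_sum big_mkcond /=; apply: eq_bigr => b _.
  under eq_bigr do rewrite prod_bool -natrM mulnb.
  rewrite sum_bool_uniq; first by rewrite inE; case: ifP.
  by move=> i j /andP [/eqP -> _] /andP [/eqP /hinj].
rewrite (eq_bigr (fun Mp : prefetching N F K => \sum_(b : bitidx N F) \sum_(i < n)
   prob_real P Mp * ((b.1 == d (u i))%:R *
     \prod_(i' < n | (i' <= i)%N) (b \notin Mp (u i'))%:R))); last first.
  by move=> Mp _; rewrite e1 mulr_sumr; apply: eq_bigr => b _; rewrite mulr_sumr.
rewrite exchange_big /=.
transitivity (\sum_(b : bitidx N F) \sum_(i < n) (b.1 == d (u i))%:R * qb P b ^+ i.+1).
  apply: eq_bigr => b _; rewrite exchange_big; apply: eq_bigr => i _ /=.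
  under eq_bigr do rewrite mulrCA.
  rewrite -mulr_sumr; congr (_ * _).
  rewrite -(card_le_ord i) -(card_imset _ uinj) -(indep _ _ hP).
  apply: eq_bigr => Mp _; congr (_ * _).
  rewrite big_imset /=; last by move=> x y _ _; apply: uinj.
  by apply: eq_bigl => x; rewrite inE.
rewrite exchange_big; apply: eq_bigr => i _.
transitivity (\sum_(b1 : 'I_N) \sum_(b2 : 'I_F) (b1 == d (u i))%:R * qb P (b1, b2) ^+ i.+1).
  rewrite pair_bigA; apply: (@eq_trans _ _ (\sum_(p : 'I_N * 'I_F) ((p.1 == d (u i))%:R * qb P p ^+ i.+1))); first by [].
  by apply: eq_bigr => -[].
rewrite (bigD1 (d (u i))) //= [X in _ + X]big1 ?addr0.
  by apply: eq_bigr => j _; rewrite eqxx mul1r.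
by move=> f hf; apply: big1 => j _; rewrite (negbTE hf) mul0r.
Qed.

Lemma count_enum_ord N (a : pred 'I_N) : count a (enum 'I_N) = #|a|.
Proof. by rewrite -sum1_count big_enum_cond /= sum1_card. Qed.

Lemma perm_stats (l1 l2 : seq nat) : perm_eq l1 l2 -> sort geq l1 = sort geq l2.
Proof.
move=> h; apply/perm_sortP => //.
- by move=> x y; rewrite /geq /= leq_total.
- by move=> x y z h1 h2; apply: leq_trans h2 h1.
- by move=> x y /andP [h1 h2]; apply/eqP; rewrite eqn_leq; apply/andP; split.
Qed.

Lemma Ne_card N K (d : demand N K) : Ne (stats d) = #|[set d k | k in 'I_K]|.
Proof.
rewrite /Ne /stats.
have h : perm_eq (sort geq [seq #|[set k | d k == n]| | n <- enum 'I_N])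
                 [seq #|[set k | d k == n]| | n <- enum 'I_N] by rewrite perm_sort.
rewrite (permP h) count_map count_enum_ord.
apply: eq_card => n; rewrite inE /= card_gt0; apply/set0Pn/imsetP.
  by case=> k; rewrite inE => /eqP <-; exists k.
by case=> k _ ->; exists k; rewrite inE.
Qed.

Definition shiftd N K (t : 'I_N.+1) (d : demand N.+1 K) : demand N.+1 K :=
  [ffun k => d k + t].

Lemma stats_shift N K t (d : demand N.+1 K) : stats (shiftd t d) = stats d.
Proof.
rewrite /stats; apply: perm_stats.
have -> : [seq #|[set k | shiftd t d k == n]| | n <- enum 'I_N.+1] =
   [seq #|[set k | d k == n]| | n <- [seq n - t | n <- enum 'I_N.+1]].
  rewrite -[in RHS]map_comp; apply: eq_map => n /=; apply: eq_card => k.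
  by rewrite !inE ffunE; apply/eqP/eqP => [<-|->]; [rewrite addrK|rewrite subrK].
apply: perm_map; apply: uniq_perm.
- by rewrite map_inj_uniq ?enum_uniq // => x y /addIr.
- exact: enum_uniq.
move=> x; rewrite mem_enum; apply/mapP; exists (x + t); first by rewrite mem_enum.
by rewrite addrK.
Qed.

Lemma tangent (R : realType) (x c : R) i : 0 <= x -> 0 <= c ->
  c ^+ i.+1 + i.+1%:R * c ^+ i * (x - c) <= x ^+ i.+1.
Proof.
move=> x0 c0; elim: i => [|i IH]; first by rewrite !expr1 expr0 mulr1 mul1r addrC subrK.
have ci : 0 <= c ^+ i by apply: exprn_ge0.
have e1 : x ^+ i.+2 = x * x ^+ i.+1 by rewrite exprS.
have e2 : c ^+ i.+2 = c * c ^+ i.+1 by rewrite exprS.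
have e3 : c ^+ i.+1 = c * c ^+ i by rewrite exprS.
have h : x * (c ^+ i.+1 + i.+1%:R * c ^+ i * (x - c)) <= x * x ^+ i.+1.
  by apply: ler_wpM2l.
rewrite e1 e2; apply: le_trans h.
rewrite e3 -[i.+2]addn1 -[i.+1]addn1 !natrD.
have i0 : 0 <= i%:R :> R by rewrite ler0n.
set a := c ^+ i in ci e3 *; set m := i%:R in i0 *.
have : 0 <= (m + 1) * a * (x - c) ^+ 2.
  by apply: mulr_ge0; [apply: mulr_ge0; [lra|]|apply: sqr_ge0].
move=> hh; nra.
Qed.

Lemma jensen (R : realType) (I : finType) (q : I -> R) (c : R) i :
  (forall b, 0 <= q b) -> 0 <= c -> #|I|%:R * c <= \sum_b q b ->
  #|I|%:R * c ^+ i.+1 <= \sum_b q b ^+ i.+1.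
Proof.
move=> q0 c0 hs.
apply: (@le_trans _ _ (\sum_b (c ^+ i.+1 + i.+1%:R * c ^+ i * (q b - c)))).
  rewrite big_split /= sumr_const -mulr_sumr mulr_natl.
  rewrite -[X in X <= _]addr0 lerD2l; apply: mulr_ge0.
    by apply: mulr_ge0; [rewrite ler0n|apply: exprn_ge0].
  by rewrite sumrB sumr_const subr_ge0 -mulr_natl.
by apply: ler_sum => b _; apply: tangent.
Qed.

Lemma sum_qb (R : realType) N F (M : R) (P : {set bitidx N F} -> R) :
  is_prefetch_dist M P -> N%:R * F%:R - M * F%:R <= \sum_b qb P b.
Proof.
case=> P0 [P1 PM].
rewrite /qb exchange_big /=.
have -> : N%:R * F%:R - M * F%:R = \sum_A P A * (N%:R * F%:R - M * F%:R).
  by rewrite -mulr_suml P1 mul1r.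
apply: ler_sum => A _; rewrite -mulr_sumr.
have [->|pA] := eqVneq (P A) 0; first by rewrite !mul0r.
have pA' : 0 < P A by rewrite lt_def pA P0.
apply: ler_wpM2l => //.
have hc : (#|A| + #|~: A| = N * F)%N by rewrite cardsC card_prod !card_ord.
have -> : \sum_(b : bitidx N F) (b \notin A)%:R = (N * F - #|A|)%N%:R :> R.
  rewrite -natr_sum; congr (_%:R).
  rewrite -hc addKn.
  rewrite -sum1_card [RHS]big_mkcond /=.
  by apply: eq_bigr => b _; rewrite !inE; case: (b \in A).
rewrite natrB; last by rewrite -hc leq_addr.
by rewrite natrM lerD2l lerN2 PM.
Qed.

Lemma geom (R : realType) (c : R) n :
  (1 - c) * \sum_(i < n) c ^+ i.+1 = c - c ^+ n.+1.
Proof.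
elim: n => [|n IH]; first by rewrite big_ord0 mulr0 expr1 subrr.
rewrite big_ord_recr /= mulrDr IH [c ^+ n.+2]exprS; ring.
Qed.

Lemma achN (R : realType) N F K (P : {set bitidx N F} -> R)
  (d : demand N K) (e : R) : 0 < e -> achievable P d N%:R e.
Proof.
move=> e0; exists (fun _ => 0); split; last first.
  by rewrite big1 ?ltW // => Mp _; rewrite mulr0.
move=> Mp; exists #|{: bitidx N F}|; split.
  by rewrite card_prod !card_ord natrM.
exists (fun W : library N F => [ffun i => W (enum_val i)]).
exists (fun k (X : {ffun 'I_#|{: bitidx N F}| -> bool}) (_ : library N F) =>
   [ffun j => X (enum_rank (d k, j))]).
move=> k; rewrite /err_prob.
have -> : [set W : library N F | [ffun j => [ffun i => W (enum_val i)] (enum_rank (d k, j))]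
     != file_of W (d k)] = finset.set0.
  apply/setP => W; rewrite !inE; apply/negbTE; rewrite negbK; apply/eqP/ffunP => j.
  by rewrite !ffunE enum_rankK.
by rewrite cards0 mul0r.
Qed.

Lemma Rstar_lb (R : realType) N F K (M : R) (P : {set bitidx N F} -> R)
  (d : demand N K) (e : R) n (u : 'I_n -> 'I_K) :
  0 < e -> (0 < F)%N -> is_prefetch_dist M P ->
  (\sum_(Mp : prefetching N F K) prob_real P Mp * #|Uset Mp u d|%:R) / F%:R
    - F%:R^-1 - n%:R ^+ 2 * e <= Rstar_d P d e.
Proof.
move=> e0 F0 hP; apply: lb_le_inf.
  by exists N%:R; apply: achN.
move=> Rt hRt; have := avg_bound u hP hRt.
have FR : 0 < F%:R :> R by rewrite ltr0n.
set E := \sum_(Mp : prefetching N F K) _.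
move=> h; rewrite -(ler_pM2r FR); apply: le_trans h.
have -> : (E / F%:R - F%:R^-1 - n%:R ^+ 2 * e) * F%:R = E - 1 - n%:R ^+ 2 * e * F%:R.
  by field; rewrite gt_eqF.
by [].
Qed.

Lemma sum_shift (R : realType) N F K (M : R) (P : {set bitidx N.+1 F} -> R)
  (d : demand N.+1 K) n (u : 'I_n -> 'I_K) :
  injective (fun i => d (u i)) -> is_prefetch_dist M P ->
  \sum_(t : 'I_N.+1) \sum_(Mp : prefetching N.+1 F K)
      prob_real P Mp * #|Uset Mp u (shiftd t d)|%:R
  = \sum_(i < n) \sum_(b : bitidx N.+1 F) qb P b ^+ i.+1.
Proof.
move=> hinj hP.
have e1 t : \sum_(Mp : prefetching N.+1 F K) prob_real P Mp * #|Uset Mp u (shiftd t d)|%:R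
    = \sum_(i < n) \sum_(j < F) qb P (d (u i) + t, j) ^+ i.+1.
  rewrite (EU _ hP); last by move=> x y; rewrite /= !ffunE => /addIr /hinj.
  by apply: eq_bigr => i _; apply: eq_bigr => j _; rewrite ffunE.
rewrite (eq_bigr _ (fun t _ => e1 t)) exchange_big; apply: eq_bigr => i _ /=.
rewrite exchange_big /=.
transitivity (\sum_(j < F) \sum_(x : 'I_N.+1) qb P (x, j) ^+ i.+1).
  apply: eq_bigr => j _.
  by rewrite [RHS](reindex_inj (addrI (d (u i)))).
rewrite exchange_big pair_bigA /=.
by apply: (@eq_trans _ _ (\sum_(p : 'I_N.+1 * 'I_F) qb P p ^+ i.+1)); first by apply: eq_bigr => -[].
Qed.

Lemma per_d (R : realType) N F K (M : R) (P : {set bitidx N.+1 F} -> R)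
  (d : demand N.+1 K) (e : R) n (u : 'I_n -> 'I_K) :
  0 < e -> (0 < F)%N -> 0 < M -> M <= N.+1%:R -> is_prefetch_dist M P ->
  injective (fun i => d (u i)) ->
  N.+1%:R * ((N.+1%:R - M) / M * (1 - (1 - M / N.+1%:R) ^+ n)
    - (F%:R^-1 + n%:R ^+ 2 * e))
  <= \sum_(t : 'I_N.+1) Rstar_d P (shiftd t d) e.
Proof.
move=> e0 F0 M0 MN hP hinj.
set c := 1 - M / N.+1%:R.
have NR : 0 < N.+1%:R :> R by rewrite ltr0n.
have FR : 0 < F%:R :> R by rewrite ltr0n.
have c0 : 0 <= c by rewrite /c subr_ge0 ler_pdivrMr // mul1r.
have hq0 b : 0 <= qb P b.
  by apply: sumr_ge0 => A _; apply: mulr_ge0; [case: hP => h _; exact: h|rewrite ler0n].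
have hsum : #|{: bitidx N.+1 F}|%:R * c <= \sum_b qb P b.
  apply: le_trans (sum_qb hP); rewrite card_prod !card_ord natrM /c; apply: eqW.
  by field; rewrite N1nz.
set E := fun t : 'I_N.+1 => \sum_(Mp : prefetching N.+1 F K)
      prob_real P Mp * #|Uset Mp u (shiftd t d)|%:R.
apply: (@le_trans _ _ (\sum_(t : 'I_N.+1) (E t / F%:R - F%:R^-1 - n%:R ^+ 2 * e))); last first.
  by apply: ler_sum => t _; exact: (@Rstar_lb R N.+1 F K M P (shiftd t d) e n u e0 F0 hP).
rewrite !sumrB -mulr_suml (@sum_shift R N F K M P d n u hinj hP) !sumr_const card_ord.
have hJ : \sum_(i < n) (N.+1%:R * F%:R) * c ^+ i.+1
     <= \sum_(i < n) \sum_(b : bitidx N.+1 F) qb P b ^+ i.+1.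
  apply: ler_sum => i _.
  by have := jensen i hq0 c0 hsum; rewrite card_prod !card_ord natrM.
have hg := geom c n.
have hc1 : 1 - c = M / N.+1%:R by rewrite /c; ring.
set S := \sum_(i < n) c ^+ i.+1 in hg.
have eS : S = (N.+1%:R - M) / M * (1 - c ^+ n).
  have : M / N.+1%:R * S = c * (1 - c ^+ n) by rewrite -hc1 hg exprS; ring.
  move=> h; apply: (mulfI (x := M / N.+1%:R)).
    by rewrite mulf_neq0 // ?invr_eq0 gt_eqF.
  by rewrite h /c; field; rewrite N1nz gt_eqF.
rewrite -mulr_sumr in hJ.
have hQ : S *+ N.+1 <= (\sum_(i < n) \sum_(b : bitidx N.+1 F) qb P b ^+ i.+1) / F%:R.
  by rewrite -mulr_natl ler_pdivlMr // mulrAC.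
rewrite -eS mulr_natl mulrnBl mulrnDl opprD addrA !lerD2r.
exact: hQ.
Qed.

Lemma shiftd_inj N K (t : 'I_N.+1) : injective (@shiftd N K t).
Proof.
move=> d1 d2 h; apply/ffunP => k.
by have := congr1 (fun f : demand N.+1 K => f k) h; rewrite !ffunE => /addIr.
Qed.

Theorem lemma3 (R : realType) (N F K : nat) (M e : R)
  (P : {set bitidx N F} -> R) (d0 : demand N K) :
  0 < M -> M <= N%:R -> (0 < F)%N -> 0 < e ->
  is_prefetch_dist M P ->
  (N%:R - M) / M * (1 - (1 - M / N%:R) ^+ Ne (stats d0))
    - (F%:R^-1 + (Ne (stats d0))%:R ^+ 2 * e)
  <= Rstar_s K P (stats d0) e.
Proof.
move=> M0 MN F0 e0 hP.
case: N P d0 MN hP => [|N] P d0 MN hP.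
  by have := lt_le_trans M0 MN; rewrite ltxx.
set s := stats d0; set D := demands_of N.+1 K s.
set T0 := (_ - _ : R).
have d0D : d0 \in D by rewrite inE.
have Dpos : (0 < #|D|)%N by apply/card_gt0P; exists d0.
have NR : 0 < N.+1%:R :> R by rewrite ltr0n.
rewrite /Rstar_s -/s -/D ler_pdivlMr ?ltr0n //.
have key d : d \in D -> N.+1%:R * T0 <= \sum_(t : 'I_N.+1) Rstar_d P (shiftd t d) e.
  move=> dD; have sd : stats d = s by move: dD; rewrite inE => /eqP.
  have ex (i : 'I_#|[set d k | k in 'I_K]|) : exists k, d k == enum_val i.
    by case/imsetP: (enum_valP i) => k _ ->; exists k.
  pose u := fun i => xchoose (ex i).
  have hinj : injective (fun i => d (u i)).
    move=> i j; rewrite /u (eqP (xchooseP (ex i))) (eqP (xchooseP (ex j))).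
    exact: enum_val_inj.
  have := @per_d R N F K M P d e _ u e0 F0 M0 MN hP hinj.
  by rewrite -Ne_card sd.
have hre t : \sum_(d in D) Rstar_d P (shiftd t d) e = \sum_(d in D) Rstar_d P d e.
  symmetry; rewrite (reindex_inj (@shiftd_inj N K t)) /=.
  by apply: eq_bigl => d; rewrite !inE stats_shift.
rewrite -(ler_pM2l NR).
have e2 : N.+1%:R * \sum_(d in D) Rstar_d P d e
          = \sum_(d in D) \sum_(t : 'I_N.+1) Rstar_d P (shiftd t d) e.
  rewrite [RHS]exchange_big /= (eq_bigr _ (fun t _ => hre t)) sumr_const card_ord.
  by rewrite mulr_natl.
rewrite e2 mulrA mulr_natr -sumr_const.
exact: ler_sum.
Qed.
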